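(* Let $\alpha \vDash n$ be a strong composition with $\ell(\alpha) = r$, and let $\overline{\alpha}$ have length $s$. Write $\{1 \leq j \leq r : \alpha_j > 1\} = \{j_1, \ldots, j_s\}$. Then \[ \deg(\alpha) = \deg(\overline{\alpha}) + \binom{r}{2} - s + j_1 + \cdots + j_s. \]
   Context: A strong composition $\alpha = (\alpha_1, \ldots, \alpha_r)$ of $n$ is a sequence of positive integers summing to $n$, with length $\ell(\alpha) = r$. $\operatorname{coinv}(\alpha) = \#\{1 \leq i < j \leq \ell(\alpha) : \alpha_i < \alpha_j\}$. Let $\mu(\alpha)$ be the weakly decreasing rearrangement of $\alpha$. Define $\deg(\alpha) = \operatorname{coinv}(\alpha) + \sum_{i=1}^{\ell(\alpha)} (i-1)(2\mu(\alpha)_i - 1)$. $\overline{\alpha}$ is the strong composition obtained by subtracting $1$ from every entry of $\alpha$ and deleting the resulting zeros (the empty composition has $\deg = 0$). *)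

(* Defs.v *)
From mathcomp Require Import all_boot all_order all_algebra.
Set Implicit Arguments. Unset Strict Implicit. Unset Printing Implicit Defensive.

Definition strong_comp (a : seq nat) : bool := all (fun x => 0 < x) a.

Definition coinv (a : seq nat) : nat :=
  \sum_(0 <= j < size a) \sum_(0 <= i < j) (nth 0 a i < nth 0 a j).

Definition mu (a : seq nat) : seq nat := sort geq a.

(* deg(a) = coinv(a) + sum_{i=1}^{l} (i-1)(2 mu_i - 1); with 0-based i this
   is sum_{i<l} i * (2 mu_i - 1). Each factor 2 mu_i - 1 >= 1 for strong comps. *)
Definition deg (a : seq nat) : nat :=
  coinv a + \sum_(0 <= i < size a) i * (2 * nth 0 (mu a) i - 1).

Definition abar (a : seq nat) : seq nat :=
  [seq x.-1 | x <- a & 1 < x].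

(* Main.v *)
Require Import Defs.
From mathcomp Require Import all_boot all_order all_algebra.
From mathcomp Require Import zify.

Lemma count_rcons (p : pred nat) m x : count p (rcons m x) = count p m + p x.
Proof. by rewrite -cats1 count_cat /= addn0. Qed.

Definition T (m : seq nat) := \sum_(0 <= i < size m) i * (2 * nth 0 m i - 1).

Lemma T_rcons m x : T (rcons m x) = T m + size m * (2*x - 1).
Proof.
rewrite /T size_rcons big_nat_recr //= nth_rcons ltnn eqxx; congr addn.
by apply: eq_big_nat => i /andP[_ hi]; rewrite nth_rcons hi.
Qed.

Lemma T_pred m : all (fun x => 1 < x) m -> T m = T [seq x.-1 | x <- m] + 2 * 'C(size m, 2).
Proof.
move=> /all_nthP hm; rewrite /T size_map -bin2_sum big_distrr -big_split /=.
apply: eq_big_nat => i /andP[_ hi]; rewrite (nth_map 0) //.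
have := hm 0 i hi; lia.
Qed.

Lemma geq_tr : transitive geq.
Proof. move=> a b c /= h1 h2; lia. Qed.

Lemma T_main m : sorted geq m -> all (fun x => 0 < x) m ->
  T m = T [seq x.-1 | x <- m & 1 < x] + 'C(size m, 2) + 'C(count (fun x => 1 < x) m, 2).
Proof.
elim/last_ind: m => [|m x IH]; first by rewrite /T /= big_geq.
move=> hs; rewrite all_rcons => /andP[hx hp].
have hs' : sorted leq (x :: rev m) by rewrite -rev_rcons rev_sorted; exact: hs.
have hm : sorted geq m.
  by have := path_sorted hs'; rewrite rev_sorted.
have hall : all (leq x) (rev m) by apply: (order_path_min leq_trans hs').
rewrite filter_rcons count_rcons size_rcons T_rcons.
case: (ltnP 1 x) => h1.
- have am : all (fun y => 1 < y) m.
    apply/allP => y ym; have := allP hall y; rewrite mem_rev => /(_ ym); lia.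
  rewrite map_rcons T_rcons size_map (all_filterP am) (T_pred m am).
  have -> : count (fun y => 1 < y) m = size m by apply/eqP; rewrite -all_count.
  rewrite addn1 !binS bin1 /=; have e : 2*x - 1 = (2*x.-1 - 1) + 2 by lia.
  rewrite e mulnDr; lia.
- have -> : x = 1 by lia.
  rewrite /= addn0 (IH hm hp) binS bin1; lia.
Qed.

Lemma mu_abar a : mu (abar a) = [seq x.-1 | x <- mu a & 1 < x].
Proof.
have tg : total geq by move=> p q; rewrite /= leq_total.
have an : antisymmetric geq by move=> p q /= h; apply/eqP; rewrite eqn_leq andbC.
rewrite /mu /abar.
rewrite -(sorted_sort geq_tr (s := [seq x.-1 | x <- sort geq a & 1 < x])).
  apply/(perm_sortP tg geq_tr an).
  by apply: perm_map; apply: perm_filter; rewrite perm_sym perm_sort.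
apply: (homo_sorted_in (P := fun x => 1 < x) (e := geq)).
- move=> p q _ _ /=; lia.
- by apply/allP => y; rewrite mem_filter => /andP[].
- by apply: (sorted_filter geq_tr); apply: (sort_sorted tg).
Qed.

Lemma count_lt a x : \sum_(0 <= i < size a) (nth 0 a i < x) = count (fun y => y < x) a.
Proof.
rewrite -(big_nth 0 xpredT (fun y => (y < x) : nat)).
by elim: a => [|y a IH]; rewrite ?big_nil ?big_cons ?IH.
Qed.

Lemma coinv_rcons a x : coinv (rcons a x) = coinv a + count (fun y => y < x) a.
Proof.
rewrite /coinv size_rcons big_nat_recr //= nth_rcons ltnn eqxx.
rewrite -count_lt; congr addn.
  apply: eq_big_nat => j /andP[_ hj].
  by apply: eq_big_nat => i /andP[_ hi]; rewrite !nth_rcons hj (ltn_trans hi hj).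
by apply: eq_big_nat => i /andP[_ hi]; rewrite nth_rcons hi.
Qed.

Definition J a := \sum_(0 <= j < size a) (if 1 < nth 0 a j then j else 0).

Lemma coinv_main a : all (fun x => 0 < x) a ->
  coinv a + 'C(count (fun x => 1 < x) a, 2) = coinv (abar a) + J a.
Proof.
elim/last_ind: a => [|a x IH]; first by rewrite /coinv /J /abar !big_nil.
rewrite all_rcons => /andP[hx hp].
have -> : J (rcons a x) = J a + (if 1 < x then size a else 0).
  rewrite /J size_rcons big_nat_recr //= nth_rcons ltnn eqxx; congr addn.
  by apply: eq_big_nat => i /andP[_ hi]; rewrite nth_rcons hi.
rewrite /abar filter_rcons count_rcons coinv_rcons.
case: (ltnP 1 x) => h1.
- rewrite map_rcons coinv_rcons -/(abar a) /= addn1 binS bin1.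
  have e1 : count (fun y => y < x) a = count (fun y => y == 1) a + count (fun y => 1 < y < x) a.
    rewrite -count_predUI; rewrite [X in _ + X](eq_count (a2 := pred0)) ?count_pred0 ?addn0.
      by apply: eq_in_count => y ya /=; have := allP hp y ya; lia.
    by move=> y /=; lia.
  have e2 : count (fun y => y < x.-1) (abar a) = count (fun y => 1 < y < x) a.
    by rewrite /abar count_map count_filter; apply: eq_count => y /=; lia.
  have e3 : size a = count (fun y => y == 1) a + count (fun y => 1 < y) a.
    rewrite -count_predUI; rewrite [X in _ + X](eq_count (a2 := pred0)) ?count_pred0 ?addn0.
      rewrite -(count_predT a); apply: eq_in_count => y ya /=; have := allP hp y ya; lia.
    by move=> y /=; lia.
  rewrite e1 e2 -/(abar a) in IH *; move: (IH hp); lia.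
- have -> : x = 1 by lia.
  have -> : count (fun y => y < 1) a = 0.
    by apply/eqP; rewrite -leqn0 leqNgt -has_count; apply/hasPn => y ya; have := allP hp y ya; lia.
  by rewrite /= !addn0 IH.
Qed.

Lemma deg_T b : deg b = coinv b + T (mu b).
Proof. by rewrite /deg /T /mu size_sort. Qed.

Import GRing.Theory.
Local Open Scope ring_scope.

Theorem lemma3p3 (a : seq nat) (ha : strong_comp a) :
  (deg a)%:Z =
    (deg (abar a))%:Z + ('C(size a, 2))%:Z - (size (abar a))%:Z
    + (\sum_(0 <= j < size a | 1 < nth 0 a j) j.+1)%N%:Z.
Proof.
have tg : total geq by move=> p q; rewrite /= leq_total.
have S : (\sum_(0 <= j < size a | 1 < nth 0 a j) j.+1 = J a + count (fun x => 1 < x)%N a)%N.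
  rewrite /J -sum1_count (big_nth 0 (r := a)) -big_mkcond -big_split /=.
  by apply: eq_bigr => i _; rewrite addn1.
have sz : size (abar a) = count (fun x => 1 < x)%N a by rewrite size_map size_filter.
have C := coinv_main a ha.
have Tm : T (mu a) = (T (mu (abar a)) + 'C(size a, 2) + 'C(count (fun x => 1 < x)%N a, 2))%N.
  have P : perm_eq (mu a) a by rewrite /mu perm_sort.
  rewrite mu_abar T_main.
  - by rewrite /mu size_sort -/(mu a) (permP P).
  - exact: sort_sorted tg a.
  - by rewrite (perm_all _ P).
rewrite S sz !deg_T Tm.
move: C; set c := count _ _; lia.
Qed.
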